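(* Let $q$ be a prime power, let $h(x)\in\mathbb{F}_{q^6}[x]$, let $L(x)=\sum_i a_i x^{q^i}$ be a $q$-polynomial with all $a_i\in\mathbb{F}_q$, and let $\delta\in\mathbb{F}_{q^6}$. Write $w(x)=x^{q^2}+x^q+x+\delta$. Then the polynomial $$f(x)=h(w(x))^{q^4}-h(w(x))^{q^3}+h(w(x))^{q}-h(w(x))+L(x)$$ permutes $\mathbb{F}_{q^6}$ if and only if $L(x)$ permutes $\mathbb{F}_{q^6}$.
   Context: A polynomial permutes $\mathbb{F}_{q^6}$ if it induces a bijection of $\mathbb{F}_{q^6}$. *)

(* Defs.v *)
From HB Require Import structures.
From mathcomp Require Import all_boot all_order all_algebra all_field.
Set Implicit Arguments. Unset Strict Implicit. Unset Printing Implicit Defensive.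
Import GRing.Theory.
Local Open Scope ring_scope.

Definition prime_power (q : nat) : Prop :=
  exists p k : nat, prime p /\ (0 < k)%N /\ q = (p ^ k)%N.

Definition permutes (F : finFieldType) (P : {poly F}) : Prop :=
  bijective (fun x : F => P.[x]).

Definition L_qpoly (F : finFieldType) (q n : nat) (a : 'I_n -> F) : {poly F} :=
  \sum_(i < n) (a i)%:P * 'X^(q ^ i).

Definition w_poly (F : finFieldType) (q : nat) (delta : F) : {poly F} :=
  'X^(q ^ 2) + 'X^q + 'X + delta%:P.

Definition f_poly (F : finFieldType) (q : nat) (h L : {poly F}) (delta : F)
  : {poly F} :=
  let hw := h \Po w_poly q delta in
  hw ^+ (q ^ 4) - hw ^+ (q ^ 3) + hw ^+ q - hw + L.

(* Main.v *)
Require Import Defs.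
From HB Require Import structures.
From mathcomp Require Import all_boot all_order all_algebra all_field.
Local Open Scope ring_scope.
Import GRing.Theory.
From mathcomp Require Import ring.

Section Proof.
Variables (F : finFieldType) (q : nat).
Variable frobD : forall (j : nat) (x y : F), (x + y) ^+ (q ^ j) = x ^+ (q ^ j) + y ^+ (q ^ j).
Variable q_gt0 : (0 < q)%N.
Variable frob6 : forall x : F, x ^+ (q ^ 6) = x.

Lemma frob0 j : (0 : F) ^+ (q ^ j) = 0.
Proof. rewrite expr0n expn_eq0; case: (q) q_gt0 => //. Qed.

Lemma frobN j (x : F) : (- x) ^+ (q ^ j) = - x ^+ (q ^ j).
Proof.
apply/eqP; rewrite -subr_eq0 opprK -frobD addNr frob0 //.
Qed.

Lemma frobB j (x y : F) : (x - y) ^+ (q ^ j) = x ^+ (q ^ j) - y ^+ (q ^ j).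
Proof. by rewrite frobD frobN. Qed.

Lemma frobX i j (x : F) : (x ^+ (q ^ i)) ^+ (q ^ j) = x ^+ (q ^ (i + j)).
Proof. by rewrite -exprM -expnD. Qed.

Lemma frob_sum j (I : Type) (r : seq I) (P : pred I) (G : I -> F) :
  (\sum_(i <- r | P i) G i) ^+ (q ^ j) = \sum_(i <- r | P i) (G i) ^+ (q ^ j).
Proof. by apply: (big_morph (fun x : F => x ^+ (q ^ j))) => [x y|]; rewrite ?frobD ?frob0. Qed.

Definition T (x : F) := x ^+ (q ^ 2) + x ^+ (q ^ 1) + x.
Definition g (y : F) := y ^+ (q ^ 4) - y ^+ (q ^ 3) + y ^+ (q ^ 1) - y.

Lemma TD x y : T (x + y) = T x + T y.
Proof. rewrite /T !frobD. by rewrite !addrA; congr (_ + _); rewrite -!addrA; congr (_ + _);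
  rewrite addrC -!addrA; congr (_ + _); rewrite addrC -addrA; congr (_ + _); rewrite addrC. Qed.

Lemma T0 : T 0 = 0.
Proof. by rewrite /T !frob0 !addr0. Qed.

Lemma Tg y : T (g y) = 0.
Proof.
rewrite /T /g !(frobB, frobD, frobX) /=.
rewrite !addnS !addn0 /= frob6.
ring.
Qed.

Variables (n : nat) (a : 'I_n -> F).
Variable aq : forall i, a i ^+ q = a i.

Lemma aqj i j : a i ^+ (q ^ j) = a i.
Proof. elim: j => [|j IH]; first by rewrite expr1. by rewrite expnSr exprM IH aq. Qed.

Definition Lf (x : F) := \sum_(i < n) a i * x ^+ (q ^ i).

Lemma LD x y : Lf (x + y) = Lf x + Lf y.
Proof. by rewrite /Lf -big_split; apply: eq_bigr => i _; rewrite frobD mulrDr. Qed.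

Lemma LB x y : Lf (x - y) = Lf x - Lf y.
Proof.
by rewrite /Lf -sumrB; apply: eq_bigr => i _; rewrite frobB mulrBr.
Qed.

Lemma LT x : T (Lf x) = Lf (T x).
Proof.
rewrite /T /Lf !frob_sum -!big_split /=; apply: eq_bigr => i _.
rewrite !exprMn !aqj !frobD !frobX (addnC i 2) (addnC i 1); ring.
Qed.

Lemma L_horner x : (L_qpoly q a).[x] = Lf x.
Proof.
by rewrite /L_qpoly horner_sum; apply: eq_bigr => i _; rewrite hornerCM hornerXn.
Qed.

Lemma f_horner (h : {poly F}) delta x :
  (f_poly q h (L_qpoly q a) delta).[x] = g (h.[T x + delta]) + Lf x.
Proof.
rewrite /f_poly /= !hornerE horner_comp /w_poly !hornerE L_horner /g /T !expn1 //.
Qed.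

End Proof.

Theorem mainTheorem10 (q : nat) (F : finFieldType) (n : nat)
  (h : {poly F}) (a : 'I_n -> F) (delta : F) :
  prime_power q ->
  #|F| = (q ^ 6)%N ->
  (forall i, a i ^+ q = a i) ->
  (permutes (@f_poly F q h (@L_qpoly F q n a) delta) <-> permutes (@L_qpoly F q n a)).
Proof.
move=> [p [k [pp [k0 qE]]]] cardF aq.
have chp : p \in [pchar F].
  apply: (@card_finPcharP F p (k * 6)); last exact: pp.
  by rewrite cardF qE expnM.
have frobD : forall (j : nat) (x y : F),
    (x + y) ^+ (q ^ j) = x ^+ (q ^ j) + y ^+ (q ^ j).
  move=> j x y; apply: exprDn_pchar.
  by rewrite qE (eq_pnat _ (pcharf_eq chp)) !pnatX pnat_id.
have q_gt0 : (0 < q)%N by rewrite qE expn_gt0 prime_gt0.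
have frob6 : forall x : F, x ^+ (q ^ 6) = x by move=> x; rewrite -cardF expf_card.
have TD' := @TD F q frobD. have Tg' := @Tg F q frobD q_gt0 frob6.
have LT' := @LT F q frobD q_gt0 n a aq. have LB' := @LB F q frobD q_gt0 n a.
have T0' := @T0 F q q_gt0. have fE := @f_horner F q n a h delta.
have LH := @L_horner F q n a.
rewrite /permutes.
have L0 : Lf F q n a 0 = 0 by have := LB' 0 0; rewrite subrr => ->; rewrite subrr.
have key : forall x, T F q (f_poly q h (L_qpoly q a) delta).[x] = Lf F q n a (T F q x).
  by move=> x; rewrite fE TD' Tg' add0r LT'.
split => bij.
- have finj := bij_inj bij.
  apply: injF_bij => x y; rewrite !LH => Lxy.
  have Lz : Lf F q n a (x - y) = 0 by rewrite LB' Lxy subrr.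
  set S := [set T F q u | u in [set: F]].
  have sub : S \subset [set Lf F q n a s | s in S].
    apply/subsetP => _ /imsetP [u _ ->].
    have [v ->] : exists v, u = (f_poly q h (L_qpoly q a) delta).[v].
      by case: bij => fi fK fiK; exists (fi u); rewrite fiK.
    by rewrite key; apply: imset_f; apply: imset_f.
  have injS : {in S &, injective (Lf F q n a)}.
    apply/imset_injP; rewrite eqn_leq leq_imset_card /=.
    exact: subset_leq_card.
  have Tz : T F q (x - y) = 0.
    apply: injS.
    - by apply: imset_f.
    - by rewrite -T0'; apply: imset_f.
    by rewrite -LT' Lz T0' L0.
  apply/eqP; rewrite -subr_eq0; apply/eqP.
  have : (f_poly q h (L_qpoly q a) delta).[y + (x - y)] =
         (f_poly q h (L_qpoly q a) delta).[y].
    by rewrite !fE TD' Tz addr0 LD ?Lz ?addr0.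
  by move/finj; rewrite addrC subrK => ->; rewrite subrr.
- apply: injF_bij => x y fxy.
  have TE : T F q x = T F q y.
    have := congr1 (T F q) fxy; rewrite !key -!LH.
    exact: (bij_inj bij).
  move: fxy; rewrite !fE TE => /(addrI (g F q h.[T F q y + delta])) E.
  by apply: (bij_inj bij); rewrite /= !LH.
Qed.
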